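(* Let $a_1,\dots,a_n\in\overline{K}$ ($n\ge2$) be pairwise distinct with $\nu(a_i)>0$ for all $i$ (a bouquet of branches passing through the origin), let $A$ be its associated magic matrix and $(\mathcal R,\gamma)$ its associated tree. Then $A$ induces an automorphism of $F=\{u\in\mathbf{C}^n:\sum_i u_i=0\}$ whose eigenvalues are the strictly positive rational numbers $$\sum_{T\in\mathcal R,\ T\supset T_1}\gamma(T)\,n(T),\qquad T_1\in\mathcal R.$$ If moreover all $a_i\in\mathbf C[[x]]$ (a bouquet of smooth curves through the origin), these eigenvalues are strictly positive integers.
   Context: $\overline{K}=\bigcup_{d\ge1}\mathbf{C}[[x^{1/d}]][1/x]$ with valuation $\nu$. Put $m_{i,j}=\nu(a_i-a_j)$ ($i\ne j$), $m_i=\sum_{j\ne i}m_{i,j}$. The associated magic matrix is $A=(\alpha_{i,j})$ with $\alpha_{i,j}=-m_{i,j}$ for $i\neq j$ and $\alpha_{i,i}=m_i$, viewed as an endomorphism of $\mathbf C^n$ in the canonical basis. Let $T_0=\{1,\dots,n\}$. A subset $T\subset T_0$ is a ''rameau'' if $|T|\ge2$ and for all $i,j\in T$, $i\ne j$, and $k\notin T$: $m_{i,j}>m_{i,k}=m_{j,k}$; $\mathcal R$ is the set of rameaux (it contains $T_0$, and any two are disjoint or nested). For $T\in\mathcal R$, $\alpha(T)=\inf\{m_{i,j}:i,j\in T,i\ne j\}$; for $T\ne T_0$, $\gamma(T)=\alpha(T)-\alpha(T')$ where $T'$ is the smallest element of $\mathcal R$ strictly containing $T$, and $\gamma(T_0)=\alpha(T_0)$.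 $n(T)$ denotes the cardinality of $T$. *)

(* Defs.v *)
From HB Require Import structures.
From mathcomp Require Import all_boot all_order all_algebra.
From mathcomp Require Import complex Rstruct.
From Stdlib Require Import ClassicalEpsilon.
Set Implicit Arguments. Unset Strict Implicit. Unset Printing Implicit Defensive.
Import Order.TTheory GRing.Theory Num.Theory.
Local Open Scope ring_scope.

Definition CC : Type := (Rdefinitions.R)[i].

(* A Puiseux series sum_q f(q) x^q is represented by its coefficient function
   f : rat -> CC.  It lies in K-bar = U_d C[[x^(1/d)]][1/x] iff there are
   d >= 1 and N : int with support(f) inside {k/d : k in Z, k >= N}. *)
Definition is_puiseux (f : rat -> CC) : Prop :=
  exists d : nat, (0 < d)%N /\ exists N : int,
    forall q : rat, f q != 0 -> exists k : int, q = k%:~R / d%:R /\ N <= k.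

Definition is_power_series (f : rat -> CC) : Prop :=
  forall q : rat, f q != 0 -> exists k : nat, q = k%:R.

Definition psub (f g : rat -> CC) : rat -> CC := fun q => f q - g q.

Definition is_val (f : rat -> CC) (q : rat) : Prop :=
  f q != 0 /\ forall r : rat, f r != 0 -> q <= r.

(* the valuation nu(f) (meaningful for f nonzero Puiseux series) *)
Definition nu (f : rat -> CC) : rat := epsilon (inhabits 0) (is_val f).

Section Bouquet.
Variable n : nat.
Variable a : 'I_n -> rat -> CC.

Definition mm (i j : 'I_n) : rat := nu (psub (a i) (a j)).

Definition mrow (i : 'I_n) : rat := \sum_(j | j != i) mm i j.

Definition magic : 'M[CC]_n :=
  \matrix_(i, j) (if i == j then ratr (mrow i) else - ratr (mm i j)).

Definition rameau (T : {set 'I_n}) : bool :=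
  (2 <= #|T|)%N &&
  [forall i : 'I_n, forall j : 'I_n, forall k : 'I_n,
    [&& i \in T, j \in T, i != j & k \notin T] ==>
    (mm i k == mm j k) && (mm i k < mm i j)].

Definition alphaT (T : {set 'I_n}) : rat :=
  let s := [seq mm p.1 p.2 | p <- enum [set p : 'I_n * 'I_n |
              [&& p.1 \in T, p.2 \in T & p.1 != p.2]]] in
  foldr Num.min (head 0 s) s.

(* T' = smallest rameau strictly containing T (rameaux are nested, so
   minimal cardinality = smallest for inclusion) *)
Definition parentT (T : {set 'I_n}) : {set 'I_n} :=
  [arg min_(U < [set: 'I_n] | rameau U && (T \proper U)) #|U|].

Definition gammaT (T : {set 'I_n}) : rat :=
  if T == [set: 'I_n] then alphaT T else alphaT T - alphaT (parentT T).

Definition eigval (T1 : {set 'I_n}) : rat :=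
  \sum_(T : {set 'I_n} | rameau T && (T1 \subset T)) gammaT T * (#|T|)%:R.

End Bouquet.

Definition inF (n : nat) (u : 'cV[CC]_n) : Prop := \sum_i u i 0 = 0.

(* Main.v *)
Require Import Defs.
From HB Require Import structures.
From mathcomp Require Import all_boot all_order all_algebra.
From mathcomp Require Import complex Rstruct ring lra zify.
From Stdlib Require Import ClassicalEpsilon FunctionalExtensionality.
Set Implicit Arguments. Unset Strict Implicit. Unset Printing Implicit Defensive.
Import Order.TTheory GRing.Theory Num.Theory.
Local Open Scope ring_scope.

Section Val.
Variable n : nat.
Variable a : 'I_n -> rat -> CC.
Hypothesis Hpu : forall i, is_puiseux (a i).
Hypothesis Hinj : forall i j, a i = a j -> i = j.
Hypothesis Hpos : forall i (q : rat), a i q != 0 -> 0 < q.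

Lemma psub_ne0 i j q : psub (a i) (a j) q != 0 -> a i q != 0 \/ a j q != 0.
Proof.
rewrite /psub; have [->|] := eqVneq (a i q) 0; last by left.
by rewrite sub0r oppr_eq0; right.
Qed.

Lemma grid1 i : exists d : nat, (0 < d)%N /\
  forall q, a i q != 0 -> exists k : nat, q = k%:R / d%:R.
Proof.
have [d [d0 [N HN]]] := Hpu i; exists d; split => // q /[dup] /Hpos q0 /HN [k [qk _]].
have k0 : 0 <= k.
  have : 0 < k%:~R / d%:R :> rat by rewrite -qk.
  rewrite pmulr_lgt0 ?invr_gt0 ?ltr0n // ltr0z; apply: ltW.
case: k k0 qk => // kn _ qk; exists kn; by rewrite qk.
Qed.

Lemma grid i j : exists D : nat, (0 < D)%N /\
  forall q, psub (a i) (a j) q != 0 -> exists k : nat, q = k%:R / D%:R.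
Proof.
have [d1 [d10 H1]] := grid1 i; have [d2 [d20 H2]] := grid1 j.
exists (d1 * d2)%N; split; first by rewrite muln_gt0 d10.
move=> q /psub_ne0 [/H1 [k ->]|/H2 [k ->]].
  exists (k * d2)%N; rewrite !natrM; field.
  by rewrite !pnatr_eq0 -!lt0n d10 d20.
exists (k * d1)%N; rewrite !natrM; field.
by rewrite !pnatr_eq0 -!lt0n d10 d20.
Qed.

Lemma exists_val i j : i != j -> exists q, is_val (psub (a i) (a j)) q.
Proof.
move=> ij.
have [q0 Hq0] : exists q, psub (a i) (a j) q != 0.
  apply: NNPP => H; move/eqP: ij; apply; apply: Hinj.
  apply: functional_extensionality => q; apply/eqP; rewrite -subr_eq0.
  case: (boolP (a i q - a j q == 0)) => // h; exfalso; apply: H; by exists q.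
have [D [D0 HD]] := grid i j.
pose P k := psub (a i) (a j) (k%:R / D%:R) != 0.
have exP : exists k, P k by have [k qk] := HD _ Hq0; exists k; rewrite /P -qk.
case: (ex_minnP exP) => k Pk kmin.
exists (k%:R / D%:R); rewrite /is_val; split => // r /[dup] /HD [k' ->] Pk'.
rewrite ler_pM2r ?invr_gt0 ?ltr0n // ler_nat; exact: kmin.
Qed.

Lemma mm_val i j : i != j -> is_val (psub (a i) (a j)) (mm a i j).
Proof. by move=> ij; apply: epsilon_spec; apply: exists_val. Qed.

Lemma mm_pos i j : i != j -> 0 < mm a i j.
Proof. by move=> /mm_val [/psub_ne0 [] /Hpos]. Qed.

Lemma mm_sym i j : mm a i j = mm a j i.
Proof.
have [<-|ij] := eqVneq i j; first by [].
have ji : j != i by rewrite eq_sym.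
have [v1 m1] := mm_val ij; have [v2 m2] := mm_val ji.
apply/le_anti; apply/andP; split.
  apply: m1; move: v2; by rewrite /psub -opprB oppr_eq0.
apply: m2; move: v1; by rewrite /psub -opprB oppr_eq0.
Qed.

Lemma mm_ultra i j k : i != j -> j != k -> i != k ->
  Num.min (mm a i j) (mm a j k) <= mm a i k.
Proof.
move=> ij jk ik; have [v _] := mm_val ik.
have : psub (a i) (a j) (mm a i k) != 0 \/ psub (a j) (a k) (mm a i k) != 0.
  apply: NNPP => H; move: v; rewrite /psub.
  have -> : a i (mm a i k) - a k (mm a i k) =
    (a i (mm a i k) - a j (mm a i k)) + (a j (mm a i k) - a k (mm a i k)) by ring.
  have h1 : a i (mm a i k) - a j (mm a i k) = 0.
    case: (boolP (a i (mm a i k) - a j (mm a i k) == 0)) => [/eqP //|h]; exfalso; apply: H; by left.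
  have h2 : a j (mm a i k) - a k (mm a i k) = 0.
    case: (boolP (a j (mm a i k) - a k (mm a i k) == 0)) => [/eqP //|h]; exfalso; apply: H; by right.
  by rewrite h1 h2 addr0 eqxx.
case=> [/(proj2 (mm_val ij))|/(proj2 (mm_val jk))] h.
  by rewrite ge_min h.
by rewrite ge_min h orbT.
Qed.

Lemma mm_int i j : (forall i, is_power_series (a i)) -> i != j ->
  exists k : nat, mm a i j = k%:R.
Proof.
move=> Hps ij; have [v _] := mm_val ij.
by case: (psub_ne0 v) => /Hps.
Qed.

End Val.
Lemma foldr_min_le (s : seq rat) x0 y : y \in s -> foldr Num.min x0 s <= y.
Proof.
elim: s => //= x s IH; rewrite in_cons => /orP [/eqP->|/IH h].
  by rewrite ge_min lexx.
by rewrite ge_min h orbT.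
Qed.

Lemma foldr_min_mem (s : seq rat) x0 : foldr Num.min x0 s \in x0 :: s.
Proof.
elim: s => /= [|x s IH]; first by rewrite inE.
rewrite minEle; case: ifP => _; first by rewrite !inE eqxx orbT.
move: IH; rewrite !inE => /orP [->//|->]; by rewrite !orbT.
Qed.

Definition chS n (a : 'I_n -> rat -> CC) (T : {set 'I_n}) i :=
  [set j in T | (j == i) || (alphaT a T < mm a i j)].
Definition Sout n (a : 'I_n -> rat -> CC) (T : {set 'I_n}) i :=
  \sum_(k | k \notin T) mm a i k.

Section Comb.
Variable n : nat.
Variable a : 'I_n -> rat -> CC.
Local Notation m := (mm a).
Implicit Types (T U V : {set 'I_n}) (i j k x y z : 'I_n).
Hypothesis msym : forall i j, m i j = m j i.
Hypothesis mpos : forall i j, i != j -> 0 < m i j.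
Hypothesis multra : forall i j k, i != j -> j != k -> i != k ->
  Num.min (m i j) (m j k) <= m i k.

Lemma alpha_le T i j : i \in T -> j \in T -> i != j -> alphaT a T <= m i j.
Proof.
move=> iT jT ij; rewrite /alphaT; apply: foldr_min_le.
apply/mapP; exists (i, j) => //; by rewrite mem_enum inE /= iT jT ij.
Qed.

Lemma alpha_att T : (2 <= #|T|)%N ->
  exists i j, [/\ i \in T, j \in T, i != j & alphaT a T = m i j].
Proof.
move=> /card_gt1P [i [j [iT jT ij]]].
set s := [seq m p.1 p.2 | p <- enum [set p : 'I_n * 'I_n |
              [&& p.1 \in T, p.2 \in T & p.1 != p.2]]].
have sin : m i j \in s by apply/mapP; exists (i, j) => //; rewrite mem_enum inE /= iT jT ij.
have : alphaT a T \in s.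
  change (foldr Num.min (head 0 s) s \in s).
  have := foldr_min_mem s (head 0 s); rewrite inE => /orP [/eqP->|//].
  by case: s sin => //= x s _; rewrite inE eqxx.
case/mapP => [[p q]]; rewrite mem_enum inE /= => /and3P [pT qT pq] ->.
by exists p, q.
Qed.

Lemma ultra_gt (x : rat) i j k : i != j -> j != k -> i != k ->
  x < m i j -> x < m j k -> x < m i k.
Proof.
move=> ij jk ik h1 h2; apply: (lt_le_trans _ (multra ij jk ik)).
by rewrite lt_min h1 h2.
Qed.

Lemma rameauP T : rameau a T -> forall i j k, i \in T -> j \in T -> i != j ->
  k \notin T -> m i k = m j k /\ m i k < m i j.
Proof.
case/andP => _ /forallP H i j k iT jT ij kT.
move: (H i) => /forallP /(_ j) /forallP /(_ k).
by rewrite iT jT ij kT /= => /andP [/eqP -> h]; split.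
Qed.

Lemma rameau_card T : rameau a T -> (2 <= #|T|)%N.
Proof. by case/andP. Qed.

Lemma rameau_setT : (2 <= n)%N -> rameau a [set: 'I_n].
Proof.
move=> n2; apply/andP; split; first by rewrite cardsT card_ord.
apply/forallP => i; apply/forallP => j; apply/forallP => k.
by rewrite !in_setT /= !andbF.
Qed.

Lemma laminar U V x : rameau a U -> rameau a V -> x \in U -> x \in V ->
  (U \subset V) || (V \subset U).
Proof.
move=> rU rV xU xV; apply: NNPP => /negP; rewrite negb_or => /andP [].
case/subsetPn => y yU yV /subsetPn [z zV zU].
have xy : x != y by apply: contraNneq yV => <-.
have xz : x != z by apply: contraNneq zU => <-.
have [_ h1] := rameauP rV xV zV xz yV.
have [_ h2] := rameauP rU xU yU xy zU.
by move: (lt_trans h1 h2); rewrite ltxx.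
Qed.

Lemma chS_sub T i : chS a T i \subset T.
Proof. by apply/subsetP => j; rewrite inE => /andP []. Qed.

Lemma chS_self T i : i \in T -> i \in chS a T i.
Proof. by move=> iT; rewrite inE iT eqxx. Qed.

Lemma chS_out T i k : i \in T -> k \in T -> k \notin chS a T i -> m i k = alphaT a T.
Proof.
move=> iT kT; rewrite inE kT /= negb_or => /andP [ki]; rewrite -leNgt => h.
apply/le_anti; rewrite h alpha_le //; by rewrite eq_sym.
Qed.

Lemma chS_in T i j : i \in T -> j \in chS a T i -> j != i -> alphaT a T < m i j.
Proof. by move=> iT; rewrite inE => /andP [_ /orP [->|]]. Qed.

Lemma chS_cross T i j k : i \in T -> j \in chS a T i -> k \in T ->
  k \notin chS a T i -> m j k = alphaT a T.
Proof.
move=> iT jC kT kC.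
have ik := chS_out iT kT kC.
have [->//|ji] := eqVneq j i.
have jT : j \in T by move: jC; rewrite inE => /andP [].
have ki : k != i by apply: contraNneq kC => ->; exact: chS_self.
have jk : j != k by apply: contraNneq kC => <-.
apply/le_anti; rewrite alpha_le // andbT leNgt; apply/negP => h.
have := chS_in iT jC ji => h2.
have := @ultra_gt (alphaT a T) i j k; rewrite eq_sym ji jk eq_sym ki => /(_ isT isT isT h2 h).
by rewrite ik ltxx.
Qed.

Lemma chS_proper T i : rameau a T -> i \in T -> exists2 k, k \in T & k \notin chS a T i.
Proof.
move=> rT iT; have [p [q [pT qT pq e]]] := alpha_att (rameau_card rT).
have [<-|pi] := eqVneq p i.
  by exists q => //; rewrite inE qT negb_or eq_sym pq -e ltxx.
have [<-|qi] := eqVneq q i.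
  by exists p => //; rewrite inE pT negb_or pq msym -e ltxx.
case: (boolP (p \in chS a T i)) => pC; last by exists p.
case: (boolP (q \in chS a T i)) => qC; last by exists q.
have h1 := chS_in iT pC pi; have h2 := chS_in iT qC qi.
have : alphaT a T < m p q.
  apply: (@ultra_gt _ p i q) => //; first by rewrite eq_sym.
  by rewrite msym.
by rewrite -e ltxx.
Qed.

Lemma chS_rameau T i : rameau a T -> i \in T -> (2 <= #|chS a T i|)%N ->
  rameau a (chS a T i).
Proof.
move=> rT iT c2; apply/andP; split => //.
apply/forallP => x; apply/forallP => y; apply/forallP => k.
apply/implyP => /and4P [xC yC xy kC].
have xT : x \in T by move: xC; rewrite inE => /andP [].
have yT : y \in T by move: yC; rewrite inE => /andP [].
have hxy : alphaT a T < m x y.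
  have [exi|xi] := eqVneq x i.
    by rewrite exi; apply: chS_in => //; rewrite -exi eq_sym.
  have [eyi|yi] := eqVneq y i.
    by rewrite eyi msym; apply: chS_in.
  apply: (@ultra_gt _ x i y xi _ xy); [by rewrite eq_sym | | exact: chS_in].
  by rewrite msym; apply: chS_in.
case: (boolP (k \in T)) => kT.
  rewrite (chS_cross iT xC kT kC) (chS_cross iT yC kT kC) eqxx /=.
  by [].
have [e h] := rameauP rT xT yT xy kT.
by rewrite e eqxx /= -e.
Qed.


Hypothesis n2 : (2 <= n)%N.

Lemma parentP T : T != [set: 'I_n] ->
  [/\ rameau a (parentT a T), T \proper parentT a T &
     forall U, rameau a U -> T \proper U -> (#|parentT a T| <= #|U|)%N].
Proof.
move=> nT; rewrite /parentT.
case: arg_minnP; first by rewrite rameau_setT // properT.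
move=> P /andP [rP TP] Pmin; split => // U rU TU; apply: Pmin; by rewrite rU.
Qed.

Lemma parent_sub T U : rameau a T -> T != [set: 'I_n] -> rameau a U ->
  T \proper U -> parentT a T \subset U.
Proof.
move=> rT nT rU TU; have [rP TP Pmin] := parentP nT.
have [i iT] : exists i, i \in T.
  by have /card_gt0P := leq_trans (isT : (0 < 2)%N) (rameau_card rT).
have iP : i \in parentT a T by apply: (subsetP (proper_sub TP)).
have iU : i \in U by apply: (subsetP (proper_sub TU)).
case/orP: (laminar rP rU iP iU) => // UP.
have -> // : parentT a T = U.
apply/eqP; rewrite eq_sym eqEcard UP /=; exact: Pmin.
Qed.

Lemma child_parent T i : rameau a T -> T != [set: 'I_n] -> i \in T ->
  chS a (parentT a T) i = T.
Proof.
move=> rT nT iT; have [rP TP Pmin] := parentP nT.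
set P := parentT a T in rP TP Pmin *.
have iP : i \in P by apply: (subsetP (proper_sub TP)).
have TC : T \subset chS a P i.
  apply/subsetP => t tT; rewrite inE (subsetP (proper_sub TP)) //=.
  case: (t =P i) => [_ //|/eqP ti] /=.
  have [_ [k kP kT]] := properP TP.
  have ik : i != k by apply: contraNneq kT => <-.
  apply: (le_lt_trans (alpha_le iP kP ik)).
  have it : i != t by rewrite eq_sym.
  by have [_ h] := rameauP rT iT tT it kT.
apply/eqP; rewrite eq_sym eqEsubset TC /=; apply/subsetP => k kC.
apply: NNPP => /negP kT.
have c2 : (2 <= #|chS a P i|)%N.
  apply: leq_trans (rameau_card rT) _; apply: subset_leq_card TC.
have rC := chS_rameau rP iP c2.
have TCp : T \proper chS a P i by apply/properP; split => //; exists k.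
have := Pmin _ rC TCp.
have [k' k'P k'C] := chS_proper rP iP.
have : chS a P i \proper P by apply/properP; split; [exact: chS_sub | exists k'].
by move/proper_card; rewrite ltnNge => /negP.
Qed.


Lemma Sout_const T i j : rameau a T -> i \in T -> j \in T -> Sout a T i = Sout a T j.
Proof.
move=> rT iT jT; apply: eq_bigr => k kT.
have [->//|ij] := eqVneq i j.
by have [] := rameauP rT iT jT ij kT.
Qed.

Lemma Sout_ge0 T i : i \in T -> 0 <= Sout a T i.
Proof.
move=> iT; apply: sumr_ge0 => k kT; apply: ltW; apply: mpos.
by apply: contraNneq kT => <-.
Qed.

Lemma eigval_eq T i : rameau a T -> i \in T ->
  eigval a T = alphaT a T * #|T|%:R + Sout a T i.
Proof.
have [k] := ubnP (n - #|T|); elim: k T => // k IH T hk rT iT.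
have [->|nT] := eqVneq T [set: 'I_n].
  rewrite /eigval (bigD1 [set: 'I_n]) /=; last by rewrite rameau_setT // subxx.
  rewrite big_pred0; last first.
    by move=> U; rewrite subTset; case: eqP; rewrite ?andbF.
  rewrite /gammaT eqxx /Sout big_pred0 ?addr0 ?addr0 // => j.
  by rewrite in_setT.
have [rP TP Pmin] := parentP nT.
set P := parentT a T in rP TP Pmin *.
have iP : i \in P by apply: (subsetP (proper_sub TP)).
have cTP := proper_card TP.
have cP : (#|P| <= n)%N by rewrite -[X in (_ <= X)%N]card_ord max_card.
have IHP := IH P ltac:(lia) rP iP.
rewrite /eigval (bigD1 T) /=; last by rewrite rT subxx.
rewrite (eq_bigl (fun U => rameau a U && (P \subset U))); last first.
  move=> U; apply/idP/idP.
    case/andP => /andP [rU TU] UT; rewrite rU /=.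
    apply: parent_sub => //; by rewrite properEneq eq_sym UT.
  case/andP => rU PU; rewrite rU (subset_trans (proper_sub TP) PU) /=.
  apply/eqP => UT; move: PU TP; rewrite UT => PT; by rewrite properE PT andbF.
rewrite -/(eigval a P) IHP /gammaT (negbTE nT).
have -> : Sout a T i = Sout a P i + alphaT a P * #|P :\: T|%:R.
  rewrite /Sout (bigID (fun k => k \in P)) /= addrC; congr (_ + _).
    apply: eq_bigl => j; apply/idP/idP; first by case/andP.
    move=> jP; rewrite jP andbT; apply: contra jP; apply: (subsetP (proper_sub TP)).
  rewrite (eq_bigl (fun j => j \in P :\: T)); last by move=> j; rewrite in_setD.
  rewrite (eq_bigr (fun _ => alphaT a P)) ?sumr_const ?mulr_natr //.
  move=> j; rewrite in_setD => /andP [jT jP].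
  apply: chS_out => //; by rewrite child_parent.
have cPT : #|P|%:R = #|T|%:R + #|P :\: T|%:R :> rat.
  rewrite -natrD -(cardsID T P) (setIidPr (proper_sub TP)) //.
rewrite cPT; ring.
Qed.

Lemma eigval_pos T : rameau a T -> 0 < eigval a T.
Proof.
move=> rT; have [i [j [iT jT ij e]]] := alpha_att (rameau_card rT).
rewrite (eigval_eq rT iT); apply: ltr_pwDl; last exact: Sout_ge0.
rewrite e pmulr_rgt0 ?mpos // ltr0n.
exact: leq_trans (rameau_card rT).
Qed.

Lemma eigval_int T : rameau a T -> (forall i j, i != j -> exists k : nat, m i j = k%:R) ->
  exists z : int, eigval a T = z%:~R.
Proof.
move=> rT Hint; have [i [j [iT jT ij e]]] := alpha_att (rameau_card rT).
have [c ec] := Hint _ _ ij.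
have [s es] : exists s : nat, Sout a T i = s%:R.
  rewrite /Sout; elim/big_rec: _ => [|k x kT [s ->]]; first by exists 0%N.
  have ik : i != k by apply: contraNneq kT => <-.
  have [d ->] := Hint _ _ ik; exists (d + s)%N; by rewrite natrD.
exists (Posz (c * #|T| + s)%N).
by rewrite (eigval_eq rT iT) e ec es -pmulrn natrD natrM.
Qed.

End Comb.
Lemma inj_unit n (B : 'M[CC]_n) : (forall u : 'cV[CC]_n, B *m u = 0 -> u = 0) ->
  B \in unitmx.
Proof.
move=> Hinj; rewrite -unitmx_tr -row_free_unit -kermx_eq0.
set K := kermx B^T.
have h : B *m K^T = 0 by rewrite -[B]trmxK -trmx_mul mulmx_ker trmx0.
have KT0 : K^T = 0.
  apply/matrixP => x y.
  have := Hinj (K^T *m delta_mx y 0); rewrite mulmxA h mul0mx => /(_ erefl).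
  rewrite -colE => /matrixP /(_ x 0); by rewrite !mxE.
by rewrite -[K]trmxK KT0 trmx0.
Qed.

Lemma sum_ind n (A : {set 'I_n}) : \sum_k ((k \in A)%:R : CC) = #|A|%:R.
Proof.
rewrite (bigID (mem A)) /= [X in _ + X]big1 ?addr0; last by move=> k /negbTE ->.
rewrite (eq_bigr (fun _ => 1)) ?sumr_const //; by move=> k ->.
Qed.

Lemma sum_mul_ind n (A : {set 'I_n}) (f : 'I_n -> CC) :
  \sum_k f k * (k \in A)%:R = \sum_(k in A) f k.
Proof.
rewrite (bigID (mem A)) /= [X in _ + X]big1 ?addr0; last by move=> k /negbTE ->; rewrite mulr0.
by apply: eq_bigr => k ->; rewrite mulr1.
Qed.

Definition wv n (a : 'I_n -> rat -> CC) (T : {set 'I_n}) i : 'cV[CC]_n :=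
  \col_k (#|T :\: chS a T i|%:R * (k \in chS a T i)%:R -
          #|chS a T i|%:R * (k \in T :\: chS a T i)%:R).

Section Mat.
Variable n : nat.
Variable a : 'I_n -> rat -> CC.
Local Notation m := (mm a).
Hypothesis msym : forall i j, m i j = m j i.
Hypothesis mpos : forall i j, i != j -> 0 < m i j.
Hypothesis multra : forall i j k, i != j -> j != k -> i != k ->
  Num.min (m i j) (m j k) <= m i k.
Hypothesis n2 : (2 <= n)%N.
Implicit Types (T U V : {set 'I_n}) (i j k x y z : 'I_n).
Local Notation rr := (@ratr CC).

Lemma magic_mul (u : 'cV[CC]_n) j :
  (magic a *m u) j 0 = \sum_k rr (m j k) * (u j 0 - u k 0).
Proof.
rewrite mxE (bigD1 j) //= mxE eqxx [in RHS](bigD1 j) //= subrr mulr0 add0r.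
rewrite /mrow rmorph_sum mulr_suml -big_split /=; apply: eq_bigr => k kj.
by rewrite mxE eq_sym (negbTE kj) mulrBr mulNr.
Qed.

Lemma magic_sym : (magic a)^T = magic a.
Proof.
apply/matrixP => i j; rewrite !mxE eq_sym.
by case: eqP => [->|_] //; rewrite msym.
Qed.

Lemma sum_magic (u : 'cV[CC]_n) : \sum_j (magic a *m u) j 0 = 0.
Proof.
rewrite (eq_bigr (fun j => \sum_k rr (m j k) * u j 0 - \sum_k rr (m j k) * u k 0));
  last by move=> j _; rewrite magic_mul -sumrB; apply: eq_bigr => k _; rewrite mulrBr.
rewrite sumrB [X in _ - X]exchange_big /=; apply/eqP; rewrite subr_eq0; apply/eqP.
by apply: eq_bigr => j _; apply: eq_bigr => k _; rewrite msym.
Qed.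

Lemma orth (u w : 'cV[CC]_n) lam mu :
  magic a *m u = lam *: u -> magic a *m w = mu *: w -> lam != mu ->
  \sum_k u k 0 * w k 0 = 0.
Proof.
move=> hu hw lm.
have e : (magic a *m u)^T *m w = u^T *m (magic a *m w).
  by rewrite trmx_mul magic_sym mulmxA.
rewrite hu hw linearZ /= -scalemxAl -scalemxAr in e.
have : (lam - mu) *: (u^T *m w) = 0 by rewrite scalerBl e subrr.
move/eqP; rewrite scaler_eq0 subr_eq0 (negbTE lm) /= => /eqP /matrixP /(_ 0 0).
rewrite !mxE => h; apply: etrans h; apply: eq_bigr => k _; by rewrite mxE.
Qed.

End Mat.

Section Mat2.
Variable n : nat.
Variable a : 'I_n -> rat -> CC.
Local Notation m := (mm a).
Hypothesis msym : forall i j, m i j = m j i.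
Hypothesis mpos : forall i j, i != j -> 0 < m i j.
Hypothesis multra : forall i j k, i != j -> j != k -> i != k ->
  Num.min (m i j) (m j k) <= m i k.
Hypothesis n2 : (2 <= n)%N.
Implicit Types (T U V : {set 'I_n}) (i j k x y z : 'I_n).
Local Notation rr := (@ratr CC).

Lemma eig_gen T i0 (w : 'cV[CC]_n) : rameau a T -> i0 \in T ->
  (forall k, k \notin T -> w k 0 = 0) -> \sum_k w k 0 = 0 ->
  (forall j k, j \in T -> k \in T -> w j 0 != w k 0 -> m j k = alphaT a T) ->
  magic a *m w = rr (eigval a T) *: w.
Proof.
move=> rT iT wout wsum wcross.
apply/matrixP => j z; rewrite (ord1 z) magic_mul [RHS]mxE.
have [jT|jT] := boolP (j \in T); last first.
  rewrite wout // mulr0.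
  rewrite (eq_bigr (fun k => - (rr (m i0 j) * w k 0))).
    by rewrite sumrN -mulr_sumr wsum mulr0 oppr0.
  move=> k _; case: (boolP (k \in T)) => kT; last first.
    by rewrite !wout // subr0 !mulr0 oppr0.
  have -> : m j k = m i0 j.
    rewrite msym; have [->//|ki] := eqVneq k i0.
    by have [] := rameauP rT kT iT ki jT.
  by rewrite sub0r mulrN.
rewrite (bigID (fun k => k \in T)) /=.
rewrite (eq_bigr (fun k => rr (alphaT a T) * (w j 0 - w k 0))); last first.
  move=> k kT; have [->|ne] := eqVneq (w j 0) (w k 0); first by rewrite subrr !mulr0.
  by rewrite wcross.
rewrite [X in _ + X](eq_bigr (fun k => rr (m j k) * w j 0)); last first.
  by move=> k kT; rewrite (wout k kT) subr0.
rewrite -mulr_sumr -mulr_suml sumrB sumr_const.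
have -> : \sum_(k in T) w k 0 = 0.
  rewrite -[RHS]wsum [RHS](bigID (fun k => k \in T)) /=.
  by rewrite [X in _ = _ + X]big1 ?addr0 // => k /wout.
rewrite -rmorph_sum -/(Sout a T j) (Sout_const rT jT iT).
rewrite (eigval_eq msym multra n2 rT iT) rmorphD rmorphM rmorph_nat.
rewrite subr0 -mulr_natr; ring.
Qed.

End Mat2.

Section Mat3.
Variable n : nat.
Variable a : 'I_n -> rat -> CC.
Local Notation m := (mm a).
Hypothesis msym : forall i j, m i j = m j i.
Hypothesis mpos : forall i j, i != j -> 0 < m i j.
Hypothesis multra : forall i j k, i != j -> j != k -> i != k ->
  Num.min (m i j) (m j k) <= m i k.
Hypothesis n2 : (2 <= n)%N.
Implicit Types (T U V : {set 'I_n}) (i j k x y z : 'I_n).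
Local Notation rr := (@ratr CC).

Lemma wvC T i k : k \in chS a T i -> wv a T i k 0 = #|T :\: chS a T i|%:R.
Proof. by move=> kC; rewrite mxE kC in_setD kC /= mulr1 mulr0 subr0. Qed.

Lemma wvD T i k : k \in T -> k \notin chS a T i -> wv a T i k 0 = - #|chS a T i|%:R.
Proof. by move=> kT kC; rewrite mxE (negbTE kC) in_setD kC kT /= mulr0 mulr1 sub0r. Qed.

Lemma wv_out T i k : k \notin T -> wv a T i k 0 = 0.
Proof.
move=> kT; have kC : k \notin chS a T i by apply: contra kT; apply: (subsetP (chS_sub _ _ _)).
by rewrite mxE (negbTE kC) in_setD (negbTE kT) andbF !mulr0 subr0.
Qed.

Lemma wv_eig T i : rameau a T -> i \in T ->
  magic a *m wv a T i = rr (eigval a T) *: wv a T i.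
Proof.
move=> rT iT; apply: (eig_gen msym multra n2 rT iT).
- exact: wv_out.
- under eq_bigr do rewrite mxE.
  by rewrite sumrB -!mulr_sumr !sum_ind mulrC subrr.
- move=> j k jT kT.
  case: (boolP (j \in chS a T i)) => jC; case: (boolP (k \in chS a T i)) => kC.
  + by move=> /negP []; rewrite (wvC jC) (wvC kC).
  + by move=> _; apply: (chS_cross multra iT jC kT kC).
  + by move=> _; rewrite msym; apply: (chS_cross multra iT kC jT jC).
  + by move=> /negP []; rewrite (wvD jT jC) (wvD kT kC).
Qed.

Lemma wv_nz T i : rameau a T -> i \in T -> wv a T i != 0.
Proof.
move=> rT iT; apply/negP => /eqP /matrixP /(_ i 0).
rewrite wvC ?chS_self // mxE => /eqP; rewrite pnatr_eq0 cards_eq0 => /eqP D0.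
have [k kT kC] := chS_proper msym multra rT iT.
have : k \in T :\: chS a T i by rewrite in_setD kC kT.
by rewrite D0 inE.
Qed.

Lemma orth_w (u : 'cV[CC]_n) lam T i : magic a *m u = lam *: u -> rameau a T -> i \in T ->
  lam != rr (eigval a T) ->
  #|T :\: chS a T i|%:R * (\sum_(k in chS a T i) u k 0) -
  #|chS a T i|%:R * (\sum_(k in T :\: chS a T i) u k 0) = 0.
Proof.
move=> hu rT iT ne; have := orth msym hu (wv_eig rT iT) ne.
under eq_bigr do rewrite mxE.
rewrite (eq_bigr (fun k => #|T :\: chS a T i|%:R * (u k 0 * (k \in chS a T i)%:R) -
    #|chS a T i|%:R * (u k 0 * (k \in T :\: chS a T i)%:R))); last first.
  by move=> k _; ring.
by rewrite sumrB -!mulr_sumr !sum_mul_ind.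
Qed.

Lemma sum_split (u : 'cV[CC]_n) T i :
  \sum_(k in T) u k 0 = \sum_(k in chS a T i) u k 0 + \sum_(k in T :\: chS a T i) u k 0.
Proof. by rewrite (big_setID (chS a T i)) /= (setIidPr (chS_sub _ _ _)). Qed.

Lemma only_eig (u : 'cV[CC]_n) lam : inF u -> magic a *m u = lam *: u ->
  (forall T, rameau a T -> lam != rr (eigval a T)) -> u = 0.
Proof.
move=> uF hu hne; rewrite /inF in uF.
have sT0 : forall T, rameau a T -> \sum_(k in T) u k 0 = 0.
  move=> T; have [k] := ubnP (n - #|T|); elim: k T => // k IH T hk rT.
  have [->|nT] := eqVneq T [set: 'I_n].
    by rewrite -[RHS]uF; apply: eq_bigl => j; rewrite in_setT.
  have [rP TP Pmin] := parentP a n2 nT.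
  set P := parentT a T in rP TP Pmin *.
  have cTP := proper_card TP.
  have cP : (#|P| <= n)%N by rewrite -[X in (_ <= X)%N]card_ord max_card.
  have sP := IH P ltac:(lia) rP.
  have [i iT] : exists i, i \in T.
    by have /card_gt0P := leq_trans (isT : (0 < 2)%N) (rameau_card rT).
  have iP : i \in P by apply: (subsetP (proper_sub TP)).
  have := orth_w hu rP iP (hne _ rP).
  have := sum_split u P i.
  rewrite (child_parent msym multra n2 rT nT iT) sP => e1 e2.
  have e3 : \sum_(k in P :\: T) u k 0 = - \sum_(k in T) u k 0.
    by apply/eqP; rewrite -addr_eq0 addrC -e1.
  rewrite e3 mulrN opprK -mulrDl -natrD in e2.
  have cP' : (#|P :\: T| + #|T|)%N = #|P|.
    by rewrite addnC -(cardsID T P) (setIidPr (proper_sub TP)).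
  rewrite cP' in e2.
  move/eqP: e2; rewrite mulf_eq0 pnatr_eq0 => /orP [/eqP c0|/eqP //].
  by move: cTP; rewrite c0.
apply/matrixP => i z; rewrite (ord1 z) mxE.
have := @arg_minnP _ [set: 'I_n] (fun U => rameau a U && (i \in U)) (fun U => #|U|).
rewrite rameau_setT // in_setT => /(_ isT) [T /andP [rT iT] Tmin].
set C := chS a T i.
have C1 : #|C| = 1%N.
  have C0 : (0 < #|C|)%N by apply/card_gt0P; exists i; apply: chS_self.
  apply/eqP; rewrite eqn_leq C0 andbT.
  rewrite leqNgt; apply/negP => c2.
  have rC := chS_rameau msym multra rT iT c2.
  have := Tmin C; rewrite rC chS_self //= => /(_ isT).
  have [k kT kC] := chS_proper msym multra rT iT.
  have : C \proper T by apply/properP; split; [exact: chS_sub | exists k].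
  by move/proper_card; rewrite ltnNge => /negP.
have Ci : C = [set i].
  apply/eqP; rewrite eq_sym eqEcard sub1set chS_self // cards1 C1 //.
have := orth_w hu rT iT (hne _ rT).
have := sum_split u T i.
have Ci' : chS a T i = [set i] := Ci.
rewrite Ci' big_set1 cards1 (sT0 _ rT) => e1 e2.
have e3 : \sum_(k in T :\: [set i]) u k 0 = - u i 0.
  by apply/eqP; rewrite -addr_eq0 addrC -e1.
rewrite e3 mul1r opprK -[X in _ + X]mul1r -mulrDl in e2.
move/eqP: e2; rewrite mulf_eq0 -(natrD _ _ 1) pnatr_eq0 addn1 /= => /eqP //.
Qed.

End Mat3.

Theorem mainTheorem2 (n : nat) (a : 'I_n -> rat -> CC) :
  (2 <= n)%N ->
  (forall i, is_puiseux (a i)) ->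
  (forall i j, a i = a j -> i = j) ->
  (forall i (q : rat), a i q != 0 -> 0 < q) ->
  (* A maps F into F *)
  (forall u : 'cV[CC]_n, inF u -> inF (magic a *m u)) /\
  (* and is bijective on F (an automorphism of F) *)
  (forall u : 'cV[CC]_n, inF u -> magic a *m u = 0 -> u = 0) /\
  (forall v : 'cV[CC]_n, inF v -> exists2 u : 'cV[CC]_n, inF u & magic a *m u = v) /\
  (* its eigenvalues on F are exactly the numbers eigval T1, T1 a rameau *)
  (forall lam : CC,
     (exists u : 'cV[CC]_n, [/\ inF u, u != 0 & magic a *m u = lam *: u]) <->
     (exists T1 : {set 'I_n}, rameau a T1 /\ lam = ratr (eigval a T1))) /\
  (* these are strictly positive rationals *)
  (forall T1 : {set 'I_n}, rameau a T1 -> 0 < eigval a T1) /\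
  (* bouquet of smooth curves: they are integers *)
  ((forall i, is_power_series (a i)) ->
     forall T1 : {set 'I_n}, rameau a T1 -> exists z : int, eigval a T1 = z%:~R).
Proof.
move=> n2 Hpu Hinj Hpos.
have msym : forall i j, mm a i j = mm a j i by move=> i j; apply: mm_sym.
have mpos : forall i j, i != j -> 0 < mm a i j by move=> i j ij; apply: mm_pos.
have multra : forall i j k, i != j -> j != k -> i != k ->
    Num.min (mm a i j) (mm a j k) <= mm a i k.
  by move=> i j k ij jk ik; apply: mm_ultra.
have pos : forall T, rameau a T -> 0 < eigval a T := eigval_pos msym mpos multra n2.
have Hinjf : forall u : 'cV[CC]_n, inF u -> magic a *m u = 0 -> u = 0.
  move=> u uF hu; apply: (only_eig msym multra n2 (lam := 0) uF).
    by rewrite hu scale0r.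
  move=> T rT; rewrite eq_sym fmorph_eq0; exact: lt0r_neq0 (pos _ rT).
have sum0 : \sum_j (0 : 'cV[CC]_n) j 0 = 0 by rewrite big1 // => j _; rewrite mxE.
split; first by move=> u _; rewrite /inF sum_magic.
split => //.
split.
  pose J : 'M[CC]_n := const_mx 1.
  pose B := magic a + n%:R^-1 *: J.
  have nz : (n%:R : CC) != 0 by rewrite pnatr_eq0 -lt0n (leq_trans _ n2).
  have sumB : forall u : 'cV[CC]_n, \sum_j (B *m u) j 0 = \sum_j u j 0.
    move=> u; rewrite (eq_bigr (fun j => (magic a *m u) j 0 + n%:R^-1 * \sum_k u k 0)).
      rewrite big_split /= (sum_magic msym) add0r sumr_const card_ord.
      by rewrite -mulrnAl -mulr_natl mulfV // mul1r.
    move=> j _; rewrite mulmxDl -scalemxAl !mxE; congr (_ + _ * _).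
    by apply: eq_bigr => k _; rewrite mxE mul1r.
  have BE : forall u : 'cV[CC]_n, inF u -> B *m u = magic a *m u.
    move=> u uF; rewrite mulmxDl -scalemxAl.
    have -> : J *m u = 0.
      apply/matrixP => j z; rewrite (ord1 z) !mxE -[RHS]uF.
      by apply: eq_bigr => k _; rewrite mxE mul1r.
    by rewrite scaler0 addr0.
  have Bunit : B \in unitmx.
    apply: inj_unit => u hu.
    have uF : inF u by rewrite /inF -sumB hu.
    by apply: Hinjf => //; rewrite -BE.
  move=> v vF; exists (invmx B *m v).
    by rewrite /inF -sumB mulKVmx.
  by rewrite -BE ?mulKVmx // /inF -sumB mulKVmx.
split.
  move=> lam; split.
    case=> u [uF unz hu]; apply: NNPP => H; move/eqP: unz; apply.
    apply: (only_eig msym multra n2 uF hu) => T rT; apply/eqP => e; apply: H.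
    by exists T.
  case=> T [rT ->].
  have [i iT] : exists i, i \in T.
    by have /card_gt0P := leq_trans (isT : (0 < 2)%N) (rameau_card rT).
  exists (wv a T i); split.
  - rewrite /inF; under eq_bigr do rewrite mxE.
    by rewrite sumrB -!mulr_sumr !sum_ind mulrC subrr.
  - by apply: wv_nz.
  - by apply: wv_eig.
split => //.
move=> Hps T rT; apply: (eigval_int msym multra n2 rT).
by move=> i j ij; apply: mm_int.
Qed.
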